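(* Let $\lambda>0$, let $A\in\mathbb{R}^{3\times3}$ have singular values $\lambda_1\le\lambda_2\le\lambda_3$, and set $\alpha=\lambda_2\lambda_3-\lambda\lambda_1$, $\beta=\lambda_1\lambda_3-\lambda\lambda_2$, $\gamma=\lambda_1\lambda_2-\lambda\lambda_3$. Then for every $R\in SO(3)$, the quantity $g(R)=(1-R_{11})\alpha+(1-R_{22})\beta+(1-R_{33})\gamma$ satisfies $$g(R)\ge\min\{2(\beta+\gamma),0\}.$$
   Context: Singular values of $A$ are the square roots of the eigenvalues of $A^TA$; $SO(3)$ is the group of $3\times3$ orthogonal matrices of determinant $1$; $R_{ij}$ is the $(i,j)$ entry of $R$. *)

(* Defs.v *)
From HB Require Import structures.
From mathcomp Require Import all_boot all_order all_algebra.
From mathcomp Require Import reals.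
Set Implicit Arguments. Unset Strict Implicit. Unset Printing Implicit Defensive.
Import Order.TTheory GRing.Theory Num.Theory.
Local Open Scope ring_scope.

(* Indices 1,2,3 of the paper are ordinals 0,1,2 of 'I_3. *)
Definition i1 : 'I_3 := @Ordinal 3 0 isT.
Definition i2 : 'I_3 := @Ordinal 3 1 isT.
Definition i3 : 'I_3 := @Ordinal 3 2 isT.

(* l1 <= l2 <= l3 are the singular values of A (with multiplicity):
   they are nonnegative and their squares are the eigenvalues of A^T A,
   i.e. the roots (with multiplicity) of the characteristic polynomial. *)
Definition singular_values3 (R : realType) (A : 'M[R]_3) (l1 l2 l3 : R) : Prop :=
  [/\ 0 <= l1, l1 <= l2, l2 <= l3 &
      char_poly (A^T *m A) =
        ('X - (l1 ^+ 2)%:P) * ('X - (l2 ^+ 2)%:P) * ('X - (l3 ^+ 2)%:P)].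

Definition SO3 (R : realType) (Q : 'M[R]_3) : Prop :=
  Q^T *m Q = 1%:M /\ \det Q = 1.

(* Main.v *)
Require Import Defs.
From HB Require Import structures.
From mathcomp Require Import all_boot all_order all_algebra.
From mathcomp Require Import reals ring lra.
Import Order.TTheory GRing.Theory Num.Theory.
Set Implicit Arguments. Unset Strict Implicit.
Local Open Scope ring_scope.

Lemma mxinordE (R : Type) (A : 'M[R]_3) : A = \matrix_(i,j) A (inord (val i)) (inord (val j)).
Proof. by apply/matrixP=> i j; rewrite mxE !inord_val. Qed.

Lemma SO3_facts (R : realType) (Q : 'M[R]_3) : SO3 Q ->
  let a := Q (inord 0) (inord 0) in let b := Q (inord 0) (inord 1) in
  let c := Q (inord 0) (inord 2) in let d := Q (inord 1) (inord 0) in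
  let e := Q (inord 1) (inord 1) in let f := Q (inord 1) (inord 2) in
  let g := Q (inord 2) (inord 0) in let h := Q (inord 2) (inord 1) in
  let k := Q (inord 2) (inord 2) in
  [/\ a = e * k - f * h, e = a * k - c * g, b = f * g - d * k, d = c * h - b * k &
   [/\ c^+2 + f^+2 + k^+2 = 1, g^+2 + h^+2 + k^+2 = 1, a^+2 + d^+2 + g^+2 = 1 &
      b^+2 + e^+2 + h^+2 = 1]].
Proof.
move=> [hO hD] a b c d e f g h k.
have hO' : Q *m Q^T = 1%:M by apply: mulmx1C.
have adjQ : \adj Q = Q^T.
  by rewrite -[\adj Q]mul1mx -hO -mulmxA mul_mx_adj hD mulmx1.
have C (i j : 'I_3) := congr1 (fun M : 'M[R]_3 => M i j) adjQ.
have O (i j : 'I_3) := congr1 (fun M : 'M[R]_3 => M i j) hO.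
have O' (i j : 'I_3) := congr1 (fun M : 'M[R]_3 => M i j) hO'.
move: (C i1 i1) (C i2 i2) (C i2 i1) (C i1 i2) (O i3 i3) (O' i3 i3) (O i1 i1) (O i2 i2).
rewrite [Q]mxinordE !mxE /cofactor !(expand_det_row _ ord0) !big_ord_recl !big_ord0.
rewrite !mxE /cofactor !det_mx11 !mxE /= /bump /=.
rewrite -/a -/b -/c -/d -/e -/f -/g -/h -/k.
move=> E11 E22 E12 E21 N1 N2 N3 N4.
split; last split.
- by rewrite -E11; ring.
- by rewrite -E22; ring.
- by rewrite -E12; ring.
- by rewrite -E21; ring.
- by transitivity (c*c + (f*f+(k*k+0))); [ring | exact: N1].
- by transitivity (g*g+(h*h+(k*k+0))); [ring | exact: N2].
- by transitivity (a*a+(d*d+(g*g+0))); [ring | exact: N3].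
- by transitivity (b*b+(e*e+(h*h+0))); [ring | exact: N4].
Qed.

Lemma diag_ineq (R : realType) (a b c d e f g h k : R) :
  a = e * k - f * h -> e = a * k - c * g -> b = f * g - d * k -> d = c * h - b * k ->
  c^+2 + f^+2 + k^+2 = 1 -> g^+2 + h^+2 + k^+2 = 1 -> a^+2 + d^+2 + g^+2 = 1 ->
  b^+2 + e^+2 + h^+2 = 1 ->
  [/\ 0 <= 1 + a + e + k, 0 <= 1 + a - e - k, 0 <= 1 - a + e - k & 0 <= 1 - a - e + k].
Proof.
move=> E11 E22 E12 E21 N1 N2 N3 N4.
have s : (a - e) * (1 + k) = c * g - f * h.
  have z : (a - (e*k - f*h)) - (e - (a*k - c*g)) = 0 by rewrite -E11 -E22; ring.
  nra.
have t : (b + d) * (1 + k) = f * g + c * h.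
  have z : (b - (f*g - d*k)) + (d - (c*h - b*k)) = 0 by rewrite -E12 -E21; ring.
  nra.
have u : (a + e) * (1 - k) = - (f * h + c * g).
  have z : (a - (e*k - f*h)) + (e - (a*k - c*g)) = 0 by rewrite -E11 -E22; ring.
  nra.
have v : (b - d) * (1 - k) = f * g - c * h.
  have z : (b - (f*g - d*k)) - (d - (c*h - b*k)) = 0 by rewrite -E12 -E21; ring.
  nra.
have sq : (1 - k^+2)^+2 = (c^+2 + f^+2) * (g^+2 + h^+2).
  have -> : c^+2 + f^+2 = 1 - k^+2 by lra.
  have -> : g^+2 + h^+2 = 1 - k^+2 by lra.
  ring.
have P12 : (1 + k)^+2 * ((1 + a - e - k) * (1 - a + e - k)) = (f * g + c * h)^+2.
  have -> : (1 + k)^+2 * ((1 + a - e - k) * (1 - a + e - k)) =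
    (1 - k^+2)^+2 - ((a - e) * (1 + k))^+2 by ring.
  rewrite sq s; ring.
have P03 : (1 - k)^+2 * ((1 + a + e + k) * (1 - a - e + k)) = (f * g - c * h)^+2.
  have -> : (1 - k)^+2 * ((1 + a + e + k) * (1 - a - e + k)) =
    (1 - k^+2)^+2 - ((a + e) * (1 - k))^+2 by ring.
  rewrite sq u; ring.
have ka : k^+2 <= 1 by nra.
have aa : a^+2 <= 1 by nra.
have ea : e^+2 <= 1 by nra.
have k1 : -1 <= k by nra.
have k2 : k <= 1 by nra.
have a1 : -1 <= a by nra.
have a2 : a <= 1 by nra.
have e1 : -1 <= e by nra.
have e2 : e <= 1 by nra.
have [P1 P2] : 0 <= 1 + a - e - k /\ 0 <= 1 - a + e - k.
  have [->|kn] := eqVneq k (-1); first by split; lra.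
  have hk : 0 < (1 + k)^+2.
    rewrite exprn_gt0 //; rewrite lt_neqAle; apply/andP; split; last by lra.
    by apply/eqP => H; move/eqP: kn; apply; lra.
  have X : 0 <= (1 + a - e - k) * (1 - a + e - k).
    by rewrite -(pmulr_rge0 _ hk) P12 sqr_ge0.
  split; nra.
have [P0 P3] : 0 <= 1 + a + e + k /\ 0 <= 1 - a - e + k.
  have [->|kn] := eqVneq k 1; first by split; lra.
  have hk : 0 < (1 - k)^+2.
    rewrite exprn_gt0 //; rewrite lt_neqAle; apply/andP; split; last by lra.
    by apply/eqP => H; move/eqP: kn; apply; lra.
  have X : 0 <= (1 + a + e + k) * (1 - a - e + k).
    by rewrite -(pmulr_rge0 _ hk) P03 sqr_ge0.
  split; nra.
by split.
Qed.

Theorem lemma4p4 (R : realType) (lam : R) (A : 'M[R]_3) (l1 l2 l3 : R)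
  (hlam : 0 < lam) (hA : singular_values3 A l1 l2 l3) (Q : 'M[R]_3) (hQ : SO3 Q) :
  let alpha := l2 * l3 - lam * l1 in
  let beta := l1 * l3 - lam * l2 in
  let gamma := l1 * l2 - lam * l3 in
  (1 - Q i1 i1) * alpha + (1 - Q i2 i2) * beta + (1 - Q i3 i3) * gamma
    >= Num.min (2 * (beta + gamma)) 0.
Proof.
cbv zeta.
set alpha := l2 * l3 - lam * l1.
set beta := l1 * l3 - lam * l2.
set gamma := l1 * l2 - lam * l3.
have [h1 h12 h23 _] := hA.
have [E11 E22 E12 E21 [N1 N2 N3 N4]] := SO3_facts hQ.
have [P0 P1 P2 P3] := diag_ineq E11 E22 E12 E21 N1 N2 N3 N4.
have -> : i1 = inord 0 by apply/val_inj; rewrite /= inordK.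
have -> : i2 = inord 1 by apply/val_inj; rewrite /= inordK.
have -> : i3 = inord 2 by apply/val_inj; rewrite /= inordK.
move: P0 P1 P2 P3.
set a := Q (inord 0) (inord 0). set e := Q (inord 1) (inord 1).
set k := Q (inord 2) (inord 2).
move=> P0 P1 P2 P3.
have ab : beta <= alpha by rewrite /alpha /beta; nra.
have ag : gamma <= alpha by rewrite /alpha /gamma; nra.
have key : 4 * ((1 - a) * alpha + (1 - e) * beta + (1 - k) * gamma) =
  2 * ((1 + a - e - k) * (beta + gamma) + (1 - a + e - k) * (alpha + gamma)
      + (1 - a - e + k) * (alpha + beta)) by ring.
rewrite ge_min; apply/orP.
have [bg|bg] := leP 0 (beta + gamma).
  right; nra.
left; nra.
Qed.
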